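(* A finite simple graph $\Delta$ is invariant if and only if (a) every connected component of $\Delta$ is an invariant graph, and (b) no two distinct connected components of $\Delta$ having an odd number of edges are isomorphic.
   Context: A finite simple graph is called invariant if every graph automorphism induces an even permutation of its set of edges. *)

(* Defs.v *)
From mathcomp Require Import all_boot all_order all_fingroup.
Set Implicit Arguments. Unset Strict Implicit. Unset Printing Implicit Defensive.

(* A finite simple graph is a symmetric irreflexive relation [e] on a finType. *)

Definition edges (T : finType) (e : rel T) : {set {set T}} :=
  [set [set x; y] | x in [set: T], y in [set: T] & e x y].

Definition is_aut (T : finType) (e : rel T) (s : {perm T}) : Prop :=
  forall x y, e (s x) (s y) = e x y.

Definition setperm (T : finType) (s : {perm T}) : {perm {set T}} :=
  perm (imset_inj (@perm_inj T s)).

Definition edge_perm (T : finType) (e : rel T) (s : {perm T}) : {perm {set T}} :=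
  restr_perm (edges e) (setperm s).

Definition invariant_graph (T : finType) (e : rel T) : Prop :=
  forall s : {perm T}, is_aut e s -> ~~ odd_perm (edge_perm e s).

Definition components (T : finType) (e : rel T) : {set {set T}} :=
  [set [set y | connect e x y] | x : T].

Definition induced (T : finType) (e : rel T) (C : {set T}) : rel {x : T | x \in C} :=
  fun x y => e (val x) (val y).
Arguments induced {T} e C _ _.

Definition isomorphic (T1 T2 : finType) (e1 : rel T1) (e2 : rel T2) : Prop :=
  exists f : T1 -> T2, bijective f /\ forall x y, e2 (f x) (f y) = e1 x y.

(* Main.v *)
Require Import Defs.
From mathcomp Require Import all_boot all_order all_fingroup.
Import GroupScope.
Set Implicit Arguments. Unset Strict Implicit. Unset Printing Implicit Defensive.
Section Basic.
Variables (T : finType) (e : rel T).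

Lemma setpermE (s : {perm T}) A : setperm s A = s @: A.
Proof. by rewrite /setperm permE. Qed.

Lemma in_edges A : reflect (exists x y, e x y /\ A = [set x; y]) (A \in edges e).
Proof.
apply: (iffP idP).
  by case/imset2P=> x y _; rewrite inE => /andP[_ exy] ->; exists x, y.
by case=> x [y [exy ->]]; apply/imset2P; exists x y; rewrite ?inE ?exy.
Qed.

Lemma is_autV s : is_aut e s -> is_aut e s^-1.
Proof. by move=> as_ x y; rewrite -as_ !permKV. Qed.

Lemma is_autM s t : is_aut e s -> is_aut e t -> is_aut e (s * t).
Proof. by move=> as_ at_ x y; rewrite !permM at_ as_. Qed.

Lemma imset_set2 (s : {perm T}) x y : s @: [set x; y] = [set s x; s y].
Proof. by rewrite imsetU !imset_set1. Qed.

Lemma aut_edges_sub s (A : {set T}) : is_aut e s -> A \in edges e -> s @: A \in edges e.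
Proof.
move=> as_ /in_edges[x [y [exy ->]]]; apply/in_edges; exists (s x), (s y).
by rewrite as_ imset_set2.
Qed.

Lemma aut_edges s (A : {set T}) : is_aut e s -> (s @: A \in edges e) = (A \in edges e).
Proof.
move=> as_; apply/idP/idP; last exact: aut_edges_sub.
move=> /(aut_edges_sub (is_autV as_)); rewrite -imset_comp.
by rewrite (eq_imset _ (fun x => permK s x)) imset_id.
Qed.

Lemma astabsP_gen (U : finType) (S : {set U}) (p : {perm U}) :
  (forall x, (p x \in S) = (x \in S)) -> p \in 'N(S | 'P).
Proof.
move=> H; rewrite /astabs !inE /=; apply/subsetP => x xS.
by rewrite inE /= H.
Qed.

Lemma edge_permE s (A : {set T}) : is_aut e s ->
  edge_perm e s A = if A \in edges e then s @: A else A.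
Proof.
move=> as_; rewrite /edge_perm; case: ifP => AE.
  rewrite restr_permE //; first by rewrite setpermE.
  by apply: astabsP_gen => B; rewrite setpermE aut_edges.
by rewrite (out_perm (restr_perm_on _ _)) // AE.
Qed.

Lemma edge_permM s t : is_aut e s -> is_aut e t ->
  edge_perm e (s * t) = edge_perm e s * edge_perm e t.
Proof.
move=> as_ at_; apply/permP => A; rewrite permM !edge_permE ?is_autM //.
case: ifP => AE; last by rewrite AE.
rewrite aut_edges // AE -imset_comp; apply: eq_imset => x; rewrite permM.
  by [].
exact: (is_autM as_ at_).
Qed.
End Basic.
Lemma swap_sign (U : finType) n : forall (t : {perm U}) (E1 : {set U}),
  #|E1| = n -> (forall x, x \in E1 -> t x \notin E1 /\ t (t x) = x) ->
  (forall x, x \notin E1 -> t x \notin E1 -> t x = x) -> odd_perm t = odd n.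
Proof.
elim: n => [|n IH] t E1 cE H1 H2.
  have E0 : E1 = set0 by apply/eqP; rewrite -cards_eq0 cE.
  have -> : t = 1 by apply/permP => x; rewrite perm1 H2 // E0 inE.
  by rewrite odd_perm1.
have [a aE] : exists a, a \in E1 by apply/card_gt0P; rewrite cE.
have [taE tta] := H1 a aE.
have ne_a : a != t a by apply: contraNneq taE => <-.
set t' := t * tperm a (t a).
have -> : t = t' * tperm a (t a) by rewrite /t' -mulgA tperm2 mulg1.
rewrite odd_permM odd_tperm ne_a (IH t' (E1 :\ a)).
- by rewrite /= addbT.
- by move: cE; rewrite (cardsD1 a) aE => -[].
- move=> x; rewrite !inE => /andP[xa xE]; have [txE ttx] := H1 x xE.
  have tx_a : t x != a by apply: contraNneq txE => ->.
  have tx_ta : t x != t a by rewrite (inj_eq perm_inj).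
  have x_ta : x != t a by apply: contraNneq taE => <-.
  rewrite eq_sym in tx_a; rewrite eq_sym in tx_ta; rewrite eq_sym in x_ta.
  rewrite /t' !permM (tpermD tx_a tx_ta) ttx.
  rewrite (tpermD _ x_ta) ?(eq_sym a) //; split => //.
  by rewrite (negPf txE) andbF.
- move=> x; rewrite /t' !inE permM negb_and negbK => xE.
  have [xa|xa] := eqVneq x a; first by rewrite xa tpermR.
  have [xta|xta] := eqVneq x (t a); first by rewrite xta tta tpermL.
  move: xE; rewrite (negPf xa) /= => xE.
  have tx_ta : t x != t a by rewrite (inj_eq perm_inj).
  have tx_a : t x != a.
    by apply: contraNneq xta => txa; rewrite -(inj_eq (@perm_inj _ t)) txa tta.
  rewrite eq_sym in tx_a; rewrite eq_sym in tx_ta.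
  rewrite (tpermD tx_a tx_ta) eq_sym tx_a /= => txE.
  by apply: H2.
Qed.

Lemma tperm_inj_map (A U : finType) (f : A -> U) (finj : injective f) x y a :
  tperm (f x) (f y) (f a) = f (tperm x y a).
Proof.
case: (tpermP x y a) => [->|->|/eqP ax /eqP ay]; rewrite ?tpermL ?tpermR //.
by rewrite tpermD // (inj_eq finj) eq_sym.
Qed.

Lemma transfer_sign (A U : finType) (f : A -> U) (finj : injective f)
  (ts : seq (A * A)) : forall (p : {perm A}) (P : {perm U}),
  p = \prod_(t <- ts) tperm t.1 t.2 ->
  (forall a, P (f a) = f (p a)) -> (forall u, u \notin codom f -> P u = u) ->
  odd_perm P = odd_perm p.
Proof.
elim: ts => [|[x y] ts IH] p P.
  rewrite big_nil => -> H1 H2.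
  have -> : P = 1.
    apply/permP => u; rewrite perm1; case: (boolP (u \in codom f)) => [/codomP[a ->]|].
      by rewrite H1 perm1.
    exact: H2.
  by rewrite !odd_perm1.
move=> pE H1 H2; rewrite big_cons /= in pE.
set p' := \prod_(j <- ts) tperm j.1 j.2.
set P' := tperm (f x) (f y) * P.
have HP : odd_perm P' = odd_perm p'.
  apply: IH => //.
    by move=> a; rewrite /P' permM tperm_inj_map // H1 pE permM tpermK.
  move=> u uf; rewrite /P' permM tpermD ?H2 //.
    by apply: contraNneq uf => <-; apply: codom_f.
  by apply: contraNneq uf => <-; apply: codom_f.
move: HP; rewrite /P' pE !odd_permM !odd_tperm (inj_eq finj) => <-.
by rewrite addbA addbb.
Qed.

Lemma transfer_sign' (A U : finType) (f : A -> U) (finj : injective f)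
  (p : {perm A}) (P : {perm U}) :
  (forall a, P (f a) = f (p a)) -> (forall u, u \notin codom f -> P u = u) ->
  odd_perm P = odd_perm p.
Proof. by case: (prod_tpermP p) => ts pE _; apply: transfer_sign pE. Qed.

Lemma imset_set2' (A B : finType) (f : A -> B) x y : f @: [set x; y] = [set f x; f y].
Proof. by rewrite imsetU !imset_set1. Qed.

Section Graph.
Variables (T : finType) (e : rel T) (e_sym : symmetric e).

Let csym : connect_sym e := sym_connect_sym e_sym.

Definition cls x := [set y | connect e x y].

Lemma cls_self x : x \in cls x.
Proof. by rewrite inE connect0. Qed.

Lemma cls_in x : cls x \in components e.
Proof. by apply/imsetP; exists x. Qed.

Lemma cls_eq x y : y \in cls x -> cls y = cls x.
Proof.
rewrite inE => cxy; apply/setP => z; rewrite !inE.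
by rewrite -(same_connect csym cxy) /= csym.
Qed.

Lemma comp_eq C x : C \in components e -> x \in C -> C = cls x.
Proof. by case/imsetP => y _ -> xC; rewrite (cls_eq xC). Qed.

Lemma comp_closed C x y : C \in components e -> x \in C -> e x y -> y \in C.
Proof.
move=> Cc xC exy; rewrite (comp_eq Cc xC) inE; exact: connect1.
Qed.

Lemma comp_edge C x y : C \in components e -> x \in C -> y \notin C -> e x y = false.
Proof. by move=> Cc xC; apply: contraNF => exy; apply: comp_closed exy. Qed.

Lemma comp_edge' C x y : C \in components e -> x \notin C -> y \in C -> e x y = false.
Proof. by move=> Cc xC yC; rewrite e_sym (comp_edge Cc yC xC). Qed.

Lemma comp_disj C1 C2 x : C1 \in components e -> C2 \in components e ->
  C1 != C2 -> x \in C1 -> x \notin C2.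
Proof.
move=> C1c C2c /eqP neq xC1; apply/negP => xC2; apply: neq.
by rewrite (comp_eq C1c xC1) (comp_eq C2c xC2).
Qed.

Lemma aut_connect s x y : is_aut e s -> connect e x y -> connect e (s x) (s y).
Proof.
move=> as_ /connectP[p pp ->]; apply/connectP; exists (map s p).
  by apply: homo_path pp => a b; rewrite as_.
by rewrite last_map.
Qed.

Definition EC (C : {set T}) := [set A in edges e | A \subset C].

Lemma val_edges (C : {set T}) (A : {set {x | x \in C}}) :
  (val @: A \in edges e) = (A \in edges (induced e C)).
Proof.
apply/in_edges/in_edges => [[x [y [exy AE]]]|[u [v [euv ->]]]]; last first.
  by exists (val u), (val v); split => //; rewrite imset_set2'.
have : x \in val @: A by rewrite AE !inE eqxx.
have : y \in val @: A by rewrite AE !inE eqxx orbT.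
case/imsetP => v _ yv; case/imsetP => u _ xu.
exists u, v; split; first by rewrite /induced -xu -yv.
by apply: (imset_inj val_inj); rewrite AE imset_set2' xu yv.
Qed.

Lemma sub_imval (C : {set T}) (B : {set T}) : B \subset C -> B = val @: [set u : {x | x \in C} | val u \in B].
Proof.
move=> BC; apply/setP => z; apply/idP/imsetP => [zB|[u]]; last by rewrite inE => ? ->.
by exists (exist _ z (subsetP BC z zB)); rewrite ?inE.
Qed.

Lemma card_EC (C : {set T}) : #|EC C| = #|edges (induced e C)|.
Proof.
have inj : injective (fun A : {set {x | x \in C}} => val @: A) := imset_inj val_inj.
rewrite -(card_imset _ inj); apply: eq_card => B.
rewrite inE; apply/andP/imsetP.
  case=> BE BC; exists [set u : {x | x \in C} | val u \in B]; last exact: sub_imval.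
  by rewrite -val_edges -sub_imval.
case=> A AE ->; rewrite val_edges; split => //.
by apply/subsetP => z /imsetP[u _ ->]; apply: valP.
Qed.


Section Ext.
Variable C : {set T}.
Notation sT := {x | x \in C}.

Definition extf (s : {perm sT}) (x : T) : T :=
  if insub x is Some u then val (s u) else x.

Lemma extfK s : cancel (extf s) (extf s^-1).
Proof.
move=> x; rewrite /extf; case: (@insubP _ _ sT x) => [u _ xu|xNC].
  by rewrite valK permK xu.
by rewrite insubN.
Qed.

Definition ext s : {perm T} := perm (can_inj (extfK s)).

Lemma ext_in s u : ext s (val u) = val (s u).
Proof. by rewrite permE /extf valK. Qed.

Lemma ext_out s x : x \notin C -> ext s x = x.
Proof. by move=> xNC; rewrite permE /extf insubN. Qed.

Lemma ext_inC s x : (ext s x \in C) = (x \in C).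
Proof.
case: (boolP (x \in C)) => xC; last by rewrite ext_out // (negPf xC).
by have -> : x = val (exist _ x xC) by []; rewrite ext_in (valP (s _)).
Qed.

Variable Cc : C \in components e.

Lemma ext_aut s : is_aut (induced e C) s -> is_aut e (ext s).
Proof.
move=> as_ x y.
case: (boolP (x \in C)) => xC; case: (boolP (y \in C)) => yC.
- have -> : x = val (exist _ x xC) by [].
  have -> : y = val (exist _ y yC) by [].
  by rewrite !ext_in -[LHS]/(induced e C _ _) as_.
- by rewrite (comp_edge Cc xC yC) (comp_edge Cc) ?ext_inC.
- by rewrite (comp_edge' Cc xC yC) (comp_edge' Cc) ?ext_inC.
- by rewrite !ext_out.
Qed.

Lemma ext_sign s : is_aut (induced e C) s ->
  odd_perm (edge_perm e (ext s)) = odd_perm (edge_perm (induced e C) s).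
Proof.
move=> as_; have aes := ext_aut as_.
apply: (transfer_sign' (f := fun A : {set sT} => val @: A)).
- exact: imset_inj val_inj.
- move=> A; rewrite !edge_permE // val_edges; case: ifP => // _.
  by rewrite -!imset_comp; apply: eq_imset => u /=; rewrite ext_in.
move=> B BN; rewrite edge_permE //; case: ifP => // /in_edges[x [y [exy BE]]].
case: (boolP (x \in C)) => xC.
  have yC := comp_closed Cc xC exy.
  have BC : B \subset C by apply/subsetP => z; rewrite BE !inE => /orP[] /eqP ->.
  by move: BN; rewrite (sub_imval BC) codom_f.
have yC : y \notin C by apply: contra xC => yC; apply: (comp_closed Cc yC); rewrite e_sym.
by rewrite BE imset_set2' !ext_out.
Qed.

End Ext.

Section Swap.
Variables (C1 C2 : {set T}) (C1c : C1 \in components e) (C2c : C2 \in components e).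
Variable neq : C1 != C2.
Variables g g' : T -> T.
Hypotheses (gC : forall x, x \in C1 -> g x \in C2) (g'C : forall y, y \in C2 -> g' y \in C1).
Hypotheses (gK : forall x, x \in C1 -> g' (g x) = x) (g'K : forall y, y \in C2 -> g (g' y) = y).
Hypothesis ge : forall x y, x \in C1 -> y \in C1 -> e (g x) (g y) = e x y.

Let disj x : x \in C1 -> x \notin C2 := comp_disj C1c C2c neq.
Let disj' x : x \in C2 -> x \notin C1.
Proof. by move=> xC2; apply: contraTN xC2 => /disj. Qed.

Definition swf x := if x \in C1 then g x else if x \in C2 then g' x else x.

Lemma swfK : involutive swf.
Proof.
move=> x; case: (boolP (x \in C1)) => xC1.
  have -> : swf x = g x by rewrite /swf xC1.
  by rewrite /swf (negPf (disj' (gC xC1))) gC // gK.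
case: (boolP (x \in C2)) => xC2.
  have -> : swf x = g' x by rewrite /swf (negPf xC1) xC2.
  by rewrite /swf g'C // g'K.
have -> : swf x = x by rewrite /swf (negPf xC1) (negPf xC2).
by rewrite /swf (negPf xC1) (negPf xC2).
Qed.

Definition swp : {perm T} := perm (inv_inj swfK).

Lemma swpE x : swp x = swf x. Proof. by rewrite permE. Qed.

Lemma swp_C2 y : (swp y \in C2) = (y \in C1).
Proof.
rewrite swpE /swf; case: ifP => yC1; first by rewrite gC.
case: ifP => yC2; first by rewrite (negPf (disj (g'C yC2))).
by rewrite yC2.
Qed.

Lemma swp_C1 y : (swp y \in C1) = (y \in C2).
Proof.
rewrite swpE /swf; case: ifP => yC1; first by rewrite (negPf (disj' (gC yC1))) (negPf (disj yC1)).
by case: ifP => yC2; [rewrite g'C | rewrite yC1].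
Qed.

Lemma swp_aut : is_aut e swp.
Proof.
move=> x y.
case: (boolP (x \in C1)) => xC1.
  case: (boolP (y \in C1)) => yC1; first by rewrite !swpE /swf xC1 yC1 ge.
  by rewrite (comp_edge C1c xC1 yC1) (comp_edge C2c) ?swp_C2.
case: (boolP (x \in C2)) => xC2.
  case: (boolP (y \in C2)) => yC2.
    rewrite !swpE /swf (negPf xC1) (negPf (disj' yC2)) xC2 yC2.
    by rewrite -ge ?g'C // !g'K.
  by rewrite (comp_edge C2c xC2 yC2) (comp_edge C1c) ?swp_C1.
case: (boolP (y \in C1)) => yC1.
  by rewrite (comp_edge' C1c xC1 yC1) (comp_edge' C2c) ?swp_C2.
case: (boolP (y \in C2)) => yC2.
  by rewrite (comp_edge' C2c xC2 yC2) (comp_edge' C1c) ?swp_C1.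
by rewrite !swpE /swf (negPf xC1) (negPf xC2) (negPf yC1) (negPf yC2).
Qed.

Lemma swp_sign : odd_perm (edge_perm e swp) = odd #|EC C1|.
Proof.
have sa := swp_aut.
have swpK : forall A : {set T}, swp @: (swp @: A) = A.
  move=> A; rewrite -imset_comp (eq_imset _ (fun x => _ : (swp \o swp) x = id x)) ?imset_id //.
  by move=> x; rewrite /= !swpE swfK.
apply: (swap_sign (E1 := EC C1)) => // A.
  rewrite inE => /andP[AE AC1]; rewrite !edge_permE // AE aut_edges // AE swpK; split => //.
  move: AE => /in_edges[x [y [exy AE]]].
  rewrite inE negb_and; apply/orP; right; apply/subsetPn; exists (swp x).
    by apply/imsetP; exists x; rewrite // AE !inE eqxx.
  have xC1 : x \in C1 by apply: (subsetP AC1); rewrite AE !inE eqxx.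
  by rewrite swp_C1 (disj xC1).
move=> AN; rewrite edge_permE //; case: ifP => // AE tAN.
have AC1 : ~~ (A \subset C1) by move: AN; rewrite /EC inE AE.
move: (AE) => /in_edges[x [y [exy AEq]]].
have yx : e y x by rewrite e_sym.
case: (boolP (x \in C1)) => xC1.
  have yC1 := comp_closed C1c xC1 exy.
  by move: AC1; rewrite AEq subUset !sub1set xC1 yC1.
case: (boolP (x \in C2)) => xC2.
  have yC2 := comp_closed C2c xC2 exy.
  by move: tAN; rewrite /EC inE aut_edges // AE /= AEq imset_set2' subUset !sub1set !swp_C1 xC2 yC2.
have yC1 : y \notin C1 by apply: contra xC1 => yC1; apply: comp_closed yx.
have yC2 : y \notin C2 by apply: contra xC2 => yC2; apply: comp_closed yx.
by rewrite AEq imset_set2' !swpE /swf (negPf xC1) (negPf xC2) (negPf yC1) (negPf yC2).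
Qed.

End Swap.



Lemma swp_parity C1 C2 (C1c : C1 \in components e) (C2c : C2 \in components e)
  (neq : C1 != C2) (g g' : T -> T)
  (gC : forall x, x \in C1 -> g x \in C2) (g'C : forall y, y \in C2 -> g' y \in C1)
  (gK : forall x, x \in C1 -> g' (g x) = x) (g'K : forall y, y \in C2 -> g (g' y) = y)
  (ge : forall x y, x \in C1 -> y \in C1 -> e (g x) (g y) = e x y) :
  odd #|EC C1| = odd #|EC C2|.
Proof.
have neq' : C2 != C1 by rewrite eq_sym.
have ge' : forall x y, x \in C2 -> y \in C2 -> e (g' x) (g' y) = e x y.
  by move=> x y xC yC; rewrite -ge ?g'C // !g'K.
rewrite -(swp_sign C1c C2c neq gC g'C gK g'K ge).
rewrite -(swp_sign C2c C1c neq' g'C gC g'K gK ge').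
congr (odd_perm (edge_perm e _)); apply/permP => x; rewrite !swpE /swf.
case: ifP => // xC1; case: ifP => // xC2.
by move: (comp_disj C1c C2c neq xC1); rewrite xC2.
Qed.

Lemma edge_perm1 : edge_perm e 1 = 1.
Proof.
have a1 : is_aut e 1 by move=> x y; rewrite !perm1.
apply/permP => A; rewrite edge_permE // perm1; case: ifP => // _.
by rewrite (eq_imset _ (fun x => perm1 x)) imset_id.
Qed.


Lemma phase2 (Ha : forall C, C \in components e -> invariant_graph (induced e C)) n :
  forall s : {perm T}, #|[set x | s x != x]| <= n -> is_aut e s ->
  (forall x, connect e x (s x)) -> odd_perm (edge_perm e s) = false.
Proof.
elim: n => [|n IH] s cs as_ cs_.
  have -> : s = 1.
    apply/permP => x; rewrite perm1; apply/eqP; apply: contraTT cs => sx.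
    by rewrite -ltnNge; apply/card_gt0P; exists x; rewrite inE.
  by rewrite edge_perm1 odd_perm1.
case: (boolP [exists x, s x != x]); last first.
  move=> /existsPn H; have -> : s = 1.
    by apply/permP => x; rewrite perm1; apply/eqP; move: (H x); rewrite negbK.
  by rewrite edge_perm1 odd_perm1.
case/existsP => x sx.
pose C := cls x; have Cc : C \in components e := cls_in x.
have sC : forall y, y \in C -> s y \in C.
  by move=> y; rewrite !inE => cxy; apply: connect_trans cxy (cs_ y).
have sCn : forall y, y \notin C -> s y \notin C.
  move=> y; apply: contra; rewrite !inE => cxsy; apply: connect_trans cxsy _.
  by rewrite csym.
pose sT := {y | y \in C}.
pose sf (u : sT) : sT := insubd u (s (val u)).
have sfv : forall u, val (sf u) = s (val u) by move=> u; rewrite insubdK //; apply: sC; apply: valP.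
have sf_inj : injective sf.
  by move=> u v /(congr1 val); rewrite !sfv => /perm_inj /val_inj.
pose sg : {perm sT} := perm sf_inj.
have sgv : forall u, val (sg u) = s (val u) by move=> u; rewrite permE sfv.
have sgaut : is_aut (induced e C) sg by move=> u v; rewrite /induced !sgv as_.
pose sCp := ext sg.
have sCaut : is_aut e sCp := ext_aut Cc sgaut.
have sCin : forall y, y \in C -> sCp y = s y.
  by move=> y yC; have -> : y = val (exist _ y yC : sT) by []; rewrite ext_in sgv.
pose s' := s * sCp^-1.
have s'aut : is_aut e s' by apply: is_autM => //; apply: is_autV.
have s'E : forall y, s' y = if y \in C then y else s y.
  move=> y; rewrite permM; case: ifP => yC.
    by rewrite -(sCin y yC) permK.
  have := ext_out sg (sCn y (negbT yC)); rewrite -/sCp => h.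
  by rewrite -{1}h permK.
have sE : s = s' * sCp by rewrite /s' -mulgA mulVg mulg1.
rewrite sE edge_permM // odd_permM (ext_sign Cc sgaut).
rewrite (negPf (Ha C Cc sg sgaut)) addbF.
apply: IH => //; last first.
  by move=> y; rewrite s'E; case: ifP => _; [apply: connect0 | apply: cs_].
rewrite -ltnS; apply: leq_trans cs; apply: proper_card; apply/properP; split.
  by apply/subsetP => y; rewrite !inE s'E; case: ifP => //; rewrite eqxx.
by exists x; rewrite !inE // s'E cls_self eqxx.
Qed.

Lemma phase1 (Ha : forall C, C \in components e -> invariant_graph (induced e C))
  (Hb : forall C1 C2, C1 \in components e -> C2 \in components e -> C1 != C2 ->
      odd #|edges (induced e C1)| -> odd #|edges (induced e C2)| ->
      ~ isomorphic (induced e C1) (induced e C2)) n :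
  forall s : {perm T}, #|[set x | ~~ connect e x (s x)]| <= n -> is_aut e s ->
  odd_perm (edge_perm e s) = false.
Proof.
elim: n => [|n IH] s cs as_.
  apply: (phase2 Ha (leqnn _)) => // x; apply: contraTT cs => sx.
  by rewrite -ltnNge; apply/card_gt0P; exists x; rewrite inE.
case: (boolP [exists x, ~~ connect e x (s x)]); last first.
  move=> /existsPn H; apply: (phase2 Ha (leqnn _)) => // x.
  by move: (H x); rewrite negbK.
case/existsP => x sx.
pose C1 := cls x; pose C2 := cls (s x).
have C1c : C1 \in components e := cls_in x.
have C2c : C2 \in components e := cls_in (s x).
have neq : C1 != C2.
  apply: contra sx => /eqP E; have : s x \in C1 by rewrite E cls_self.
  by rewrite inE.
have gC : forall y, y \in C1 -> s y \in C2.
  by move=> y; rewrite !inE; apply: aut_connect.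
have g'C : forall y, y \in C2 -> s^-1 y \in C1.
  move=> y; rewrite !inE => h; have := aut_connect (is_autV as_) h.
  by rewrite permK.
have gK : forall y, y \in C1 -> s^-1 (s y) = y by move=> y _; rewrite permK.
have g'K : forall y, y \in C2 -> s (s^-1 y) = y by move=> y _; rewrite permKV.
have ge : forall y z, y \in C1 -> z \in C1 -> e (s y) (s z) = e y z by move=> y z _ _; apply: as_.
pose t := swp C1c C2c neq gC g'C gK g'K.
have taut : is_aut e t := swp_aut C1c C2c neq gC g'C gK g'K ge.
have tsign : odd_perm (edge_perm e t) = false.
  rewrite (swp_sign C1c C2c neq gC g'C gK g'K ge); apply/negP => o1.
  have o2 : odd #|EC C2| by rewrite -(swp_parity C1c C2c neq gC g'C gK g'K ge).
  rewrite card_EC in o1; rewrite card_EC in o2.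
  apply: (Hb C1 C2 C1c C2c neq o1 o2).
  pose u1 : {y | y \in C1} := exist _ x (cls_self x).
  pose u2 : {y | y \in C2} := exist _ (s x) (cls_self (s x)).
  pose f (u : {y | y \in C1}) : {y | y \in C2} := insubd u2 (s (val u)).
  pose f' (v : {y | y \in C2}) : {y | y \in C1} := insubd u1 (s^-1 (val v)).
  have fv : forall u, val (f u) = s (val u) by move=> u; rewrite insubdK // gC // (valP u).
  have f'v : forall v, val (f' v) = s^-1 (val v) by move=> v; rewrite insubdK // g'C // (valP v).
  exists f; split.
    apply: (Bijective (g := f')) => [u|v]; apply: val_inj; first by rewrite f'v fv permK.
    by rewrite fv f'v permKV.
  by move=> u v; rewrite /induced !fv as_.
pose s' := s * t.
have s'aut : is_aut e s' by apply: is_autM.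
have neq' : C2 != C1 by rewrite eq_sym.
have disj2 := comp_disj C2c C1c neq'.
have : odd_perm (edge_perm e s') = false.
  apply: IH => //; rewrite -ltnS; apply: leq_trans cs; apply: proper_card.
  apply/properP; split.
    apply/subsetP => y; rewrite !inE; apply: contra => cy.
    rewrite permM swpE /swf.
    case: ifP => syC1.
      have yC1 : y \in C1.
        by move: syC1; rewrite !inE => cxsy; apply: connect_trans cxsy _; rewrite csym.
      by move: (disj2 _ (gC y yC1)); rewrite syC1.
    by case: ifP => // _; rewrite permK connect0.
  exists x; rewrite !inE //; apply/negPn.
  have sxC2 : s x \in C2 by apply: cls_self.
  rewrite permM swpE /swf.
  have -> : (s x \in C1) = false by apply/negbTE; apply: disj2 _ sxC2.
  by rewrite sxC2 permK connect0.
by rewrite edge_permM // odd_permM tsign addbF.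
Qed.

End Graph.

Theorem lemma2p10 (T : finType) (e : rel T)
    (e_sym : symmetric e) (e_irr : irreflexive e) :
  invariant_graph e <->
  ((forall C, C \in components e -> invariant_graph (induced e C)) /\
   (forall C1 C2, C1 \in components e -> C2 \in components e -> C1 != C2 ->
      odd #|edges (induced e C1)| -> odd #|edges (induced e C2)| ->
      ~ isomorphic (induced e C1) (induced e C2))).
Proof.
split; last first.
  case=> Ha Hb s as_; apply/negbT; exact: (phase1 e_sym Ha Hb (leqnn _)).
move=> inv; split.
  move=> C Cc sg sgaut; rewrite -(ext_sign e_sym Cc sgaut).
  by apply: inv; apply: ext_aut.
move=> C1 C2 C1c C2c neq o1 o2 [h [[h' hK h'K] hiso]].
have [x1 _ E1] := imsetP C1c; have [x2 _ E2] := imsetP C2c.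
have x1C : x1 \in C1 by rewrite E1 cls_self.
have x2C : x2 \in C2 by rewrite E2 cls_self.
pose u1 : {y | y \in C1} := exist _ x1 x1C.
pose u2 : {y | y \in C2} := exist _ x2 x2C.
pose g z := val (h (insubd u1 z)).
pose g' z := val (h' (insubd u2 z)).
have gC : forall z, z \in C1 -> g z \in C2 by move=> z _; apply: valP.
have g'C : forall z, z \in C2 -> g' z \in C1 by move=> z _; apply: valP.
have gK : forall z, z \in C1 -> g' (g z) = z.
  by move=> z zC; rewrite /g /g' valKd hK insubdK.
have g'K : forall z, z \in C2 -> g (g' z) = z.
  by move=> z zC; rewrite /g /g' valKd h'K insubdK.
have ge : forall y z, y \in C1 -> z \in C1 -> e (g y) (g z) = e y z.
  move=> y z yC zC; rewrite /g -[LHS]/(induced e C2 _ _) hiso /induced.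
  by rewrite !insubdK.
have := inv _ (swp_aut e_sym C1c C2c neq gC g'C gK g'K ge).
by rewrite (swp_sign e_sym C1c C2c neq gC g'C gK g'K ge) card_EC o1.
Qed.
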